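(* Let $G$ be a maximal $3$-$\gamma_{c}$-vertex critical graph of order $n$, with independence number $\alpha$ and clique number $\omega$. Then $\alpha+\omega\leq n-1$, and equality holds if and only if $G\in\mathcal{G}_{1}(l)$ for some $l\geq 2$.
   Context: All graphs are finite, simple and connected. A set $D\subseteq V(G)$ is a connected dominating set of $G$ if every vertex of $G$ is in $D$ or adjacent to a vertex of $D$, and $G[D]$ is connected; $\gamma_{c}(G)$ is the minimum cardinality of such a set. $G$ is $k$-$\gamma_{c}$-edge critical if $\gamma_{c}(G)=k$ and $\gamma_{c}(G+uv)<k$ for every pair of non-adjacent vertices $u,v$. A $2$-connected graph $G$ is $k$-$\gamma_{c}$-vertex critical if $\gamma_{c}(G)=k$ and $\gamma_{c}(G-v)<k$ for every $v\in V(G)$. $G$ is maximal $k$-$\gamma_{c}$-vertex critical if it is both $k$-$\gamma_{c}$-edge critical and $k$-$\gamma_{c}$-vertex critical. For $l\geq 2$, the class $\mathcal{G}_{1}(l)$ consists of the graphs (unique up to isomorphism) on vertex set $\{v,q_{1},\dots,q_{l},z_{1},\dots,z_{l}\}$ whose edges are: $vz_{i}$ for all $i$; $q_{i}q_{j}$ for all $i\neq j$; and $z_{i}q_{j}$ for all $i\neq j$ (so $\{q_1,\dots,q_l\}$ is a clique, $\{z_1,\dots,z_l\}$ is independent, and $z_iq_i\notin E$). For $l=2$ this graph is $C_5$. *)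

(* Defs.v *)
From mathcomp Require Import all_boot.
Set Implicit Arguments. Unset Strict Implicit. Unset Printing Implicit Defensive.

Section Graphs.
Variable T : finType.
Implicit Types (e : rel T) (S D : {set T}).

Definition simple_graph e := symmetric e /\ irreflexive e.

Definition restr e S : rel T := [rel x y | [&& e x y, x \in S & y \in S]].

Definition connected_on e S : Prop :=
  forall x y, x \in S -> y \in S -> connect (restr e S) x y.

Definition is_cds_on e S D : bool :=
  [&& D \subset S,
      [forall x in S, (x \in D) || [exists y in D, e x y]] &
      [forall x in D, forall y in D, connect (restr e D) x y]].

Definition gamma_c_on e S : nat :=
  \big[minn/#|S|]_(D : {set T} | is_cds_on e S D) #|D|.

Definition gamma_c e : nat := gamma_c_on e [set: T].

Definition add_edge e (u v : T) : rel T :=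
  [rel x y | [|| e x y, (x == u) && (y == v) | (x == v) && (y == u)]].

Definition two_connected e : Prop :=
  3 <= #|T| /\ connected_on e [set: T] /\
  forall v : T, connected_on e (setT :\ v).

Definition edge_critical e (k : nat) : Prop :=
  gamma_c e = k /\
  forall u v : T, u != v -> ~~ e u v -> gamma_c (add_edge e u v) < k.

Definition vertex_critical e (k : nat) : Prop :=
  two_connected e /\ gamma_c e = k /\
  forall v : T, gamma_c_on e (setT :\ v) < k.

Definition maximal_vertex_critical e (k : nat) : Prop :=
  edge_critical e k /\ vertex_critical e k.

Definition independent e S : bool := [forall x in S, forall y in S, ~~ e x y].
Definition clique e S : bool :=
  [forall x in S, forall y in S, (x != y) ==> e x y].

Definition independence_number e : nat :=
  \max_(S : {set T} | independent e S) #|S|.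
Definition clique_number e : nat :=
  \max_(S : {set T} | clique e S) #|S|.

End Graphs.

(* The graph of class G_1(l): vertex None = v, Some (inl i) = q_i,
   Some (inr i) = z_i. *)
Definition G1_vertex (l : nat) := option ('I_l + 'I_l)%type.

Definition G1_rel (l : nat) : rel (G1_vertex l) :=
  fun a b =>
    match a, b with
    | None, Some (inr _) | Some (inr _), None => true
    | Some (inl i), Some (inl j) => i != j
    | Some (inr i), Some (inl j) | Some (inl j), Some (inr i) => i != j
    | _, _ => false
    end.

Definition in_G1 (T : finType) (e : rel T) (l : nat) : Prop :=
  exists f : T -> G1_vertex l, bijective f /\ forall x y, e x y = G1_rel (f x) (f y).

(* Main.v *)
Require Import Defs.
From mathcomp Require Import all_boot zify.
Set Implicit Arguments. Unset Strict Implicit. Unset Printing Implicit Defensive.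

Lemma arith1 a b c n k : a + b + c = n + k -> k.+1 <= c -> a + b <= n - 1.
Proof. lia. Qed.
Lemma arith2 a b c n k : a + b + c = n + k -> a + b = n - 1 -> k.+1 <= c -> c = k.+1.
Proof. lia. Qed.
Lemma arith3 a b : 2 <= a -> a = 1 + b -> 0 < b.
Proof. lia. Qed.
Lemma arith4 a b c : a = 2 -> a = 1 + b -> b = 1 + c -> c = 0.
Proof. lia. Qed.

Section Comb.
Variable T : finType.
Variable e : rel T.
Hypothesis esym : symmetric e.
Hypothesis eirr : irreflexive e.

Definition dom (a b w : T) := [|| w == a, w == b, e w a | e w b].

Lemma domC a b w : dom a b w = dom b a w.
Proof. by rewrite /dom; case: (w == a); case: (w == b); case: (e w a); case: (e w b). Qed.

Hypothesis nodom : forall a b, e a b -> exists w, ~~ dom a b w.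
Hypothesis Dv : forall v, exists a b, e a b /\ [/\ ~~ e v a, ~~ e v b, a != v, b != v &
   forall w, w != v -> dom a b w].

Definition indep (I : {set T}) := forall a b, a \in I -> b \in I -> ~~ e a b.
Definition cliq (K : {set T}) := forall a b, a \in K -> b \in K -> a != b -> e a b.

Lemma outK K v a : cliq K -> v \in K -> ~~ e v a -> a != v -> a \notin K.
Proof. by move=> HK vK nva anv; apply/negP=> aK; move: nva; rewrite HK // eq_sym. Qed.

Section CaseB.
Variables (I K : {set T}) (y : T).
Hypotheses (HI : indep I) (HK : cliq K)
  (Hpart : forall x, [|| x == y, x \in K | x \in I])
  (yI : y \notin I) (yK : y \notin K) (IK : forall x, x \in I -> x \notin K).

Lemma Dv_y v : v \in K -> exists t, [/\ t \in I, e y t, ~~ e v t, ~~ e v y &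
   forall w, w != v -> dom y t w].
Proof.
move=> vK; have [a [b [eab [nva nvb anv bnv Hd]]]] := Dv v.
have aK := outK HK vK nva anv; have bK := outK HK vK nvb bnv.
have := Hpart a; have := Hpart b; rewrite (negbTE aK) (negbTE bK) /=.
case/orP=> [/eqP bY|bI]; case/orP=> [/eqP ay|aI].
- by move: eab; rewrite ay bY eirr.
- exists a; split => //; first by rewrite -bY esym.
  + by rewrite -bY.
  + by move=> w wv; rewrite domC -bY; apply: Hd.
- exists b; split => //; first by rewrite -ay.
  + by rewrite -ay.
  + by move=> w wv; rewrite -ay; apply: Hd.
- by move: (HI aI bI); rewrite eab.
Qed.

Lemma yK' v : v \in K -> ~~ e y v.
Proof. by move=> /Dv_y [t [_ _ _ h _]]; rewrite esym. Qed.

Lemma Dv_y2 v : v \in K -> exists t, [/\ t \in I, e y t, ~~ e v t &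
   forall k, k \in K -> k != v -> e t k].
Proof.
move=> vK; have [t [tI eyt nvt nvy Hd]] := Dv_y vK; exists t; split=> // k kK kv.
move: (Hd k kv); rewrite /dom [e k y]esym (negbTE (yK' kK)).
have -> : (k == y) = false by apply/negP=> /eqP ky; move: yK; rewrite -ky kK.
have -> : (k == t) = false by apply/negP=> /eqP kt; move: (IK tI); rewrite -kt kK.
by rewrite /= esym.
Qed.

Hypothesis K0 : exists k0, k0 \in K.

Lemma Iy u : u \in I -> e u y.
Proof.
move=> uI; have [k0 k0K] := K0; have [t [tI eyt nvt nvy Hd]] := Dv_y k0K.
case: (eqVneq u t) => [->|ut]; first by rewrite esym.
have ukn : u != k0 by apply/negP=> /eqP uk; move: (IK uI); rewrite uk k0K.
move: (Hd u ukn); rewrite /dom (negbTE (HI uI tI)) (negbTE ut) orbF /=.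
by case: (eqVneq u y) => [uy|] //=; move: yI; rewrite -uy uI.
Qed.

Lemma B2 u : u \in I -> exists k, [/\ k \in K, ~~ e u k & forall w, w \in I -> w != u -> e w k].
Proof.
move=> uI; have [a [b [eab [nua nub anu bnu Hd]]]] := Dv u.
have euy := Iy uI.
have ay : a != y by apply/negP=> /eqP ay; move: nua; rewrite ay euy.
have bY' : b != y by apply/negP=> /eqP bY'; move: nub; rewrite bY' euy.
suff main : forall a b, e a b -> ~~ e u a -> ~~ e u b -> a != u -> b != u -> a != y -> b != y ->
   (forall w, w != u -> dom a b w) -> a \in K -> exists k, [/\ k \in K, ~~ e u k & forall w, w \in I -> w != u -> e w k].
  have := Hpart a; rewrite (negbTE ay) /=; case/orP=> [aK|aI]; first by apply: (main a b).
  have := Hpart b; rewrite (negbTE bY') /=; case/orP=> [bK|bI]; last by move: (HI aI bI); rewrite eab.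
  apply: (main b a) => //; first by rewrite esym.
  by move=> w /Hd; rewrite domC.
move=> {}a {}b {eab nua nub anu bnu Hd ay bY'} eab nua nub anu bnu ay bY' Hd aK.
have yu : y != u by apply/negP=> /eqP yu; move: yI; rewrite yu uI.
have eyb : e y b.
  move: (Hd y yu); rewrite /dom eq_sym (negbTE ay) eq_sym (negbTE bY') (negbTE (yK' aK)).
  done.
have bI : b \in I.
  have := Hpart b; rewrite (negbTE bY') /=; case/orP=> // bK.
  by move: (yK' bK); rewrite eyb.
exists a; split => // w wI wu.
move: (Hd w wu); rewrite /dom (negbTE (HI wI bI)) orbF.
case: (eqVneq w a) => [wa|_] /=; first by move: (IK wI); rewrite wa aK.
by case: (eqVneq w b) => [->|_] //= _; rewrite esym.
Qed.

Lemma B3 v u : v \in K -> u \in I -> ~~ e u v -> forall k, k \in K -> k != v -> e u k.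
Proof.
move=> vK uI nuv k kK kv.
have [t [tI eyt nvt Htk]] := Dv_y2 vK.
case: (eqVneq u t) => [->|ut]; first exact: Htk.
have [k1 [k1K ntk1 Hw]] := B2 tI.
case: (eqVneq k1 v) => [k1v|k1v]; last by move: (Htk _ k1K k1v); rewrite (negbTE ntk1).
by move: (Hw u uI ut); rewrite k1v (negbTE nuv).
Qed.

Lemma B4 v u1 u2 : v \in K -> u1 \in I -> u2 \in I -> ~~ e u1 v -> ~~ e u2 v -> u1 = u2.
Proof.
move=> vK u1I u2I n1 n2.
have [k [kK nk Hw]] := B2 u1I.
case: (eqVneq k v) => [kv|kv]; last by move: (B3 vK u1I n1 kK kv); rewrite (negbTE nk).
case: (eqVneq u2 u1) => // u21; by move: (Hw u2 u2I u21); rewrite kv (negbTE n2).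
Qed.

Definition mm v := odflt y [pick u in I | ~~ e u v].

Lemma mmP v : v \in K -> mm v \in I /\ ~~ e (mm v) v.
Proof.
move=> vK; rewrite /mm; case: pickP => [u /andP [uI nuv] | none] //=.
have [t [tI eyt nvt Htk]] := Dv_y2 vK.
by move: (none t); rewrite /= tI esym nvt.
Qed.

Definition hh (a : G1_vertex #|K|) : T :=
  match a with
  | None => y
  | Some (inl i) => enum_val i
  | Some (inr i) => mm (enum_val i)
  end.

Lemma hrel a b : e (hh a) (hh b) = G1_rel a b.
Proof.
have evK : forall i : 'I_#|K|, enum_val i \in K by move=> i; apply: enum_valP.
have kk : forall i j : 'I_#|K|, e (enum_val i) (enum_val j) = (i != j).
  move=> i j; case: (eqVneq i j) => [->|ij]; first by rewrite eirr.
  apply: HK; rewrite ?evK //; apply/negP=> /eqP /enum_val_inj; exact/eqP.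
have km : forall i j : 'I_#|K|, e (mm (enum_val j)) (enum_val i) = (j != i).
  move=> i j; have [mI nm] := mmP (evK j).
  case: (eqVneq j i) => [<-|ji]; first by rewrite (negbTE nm); idtac.
  apply: (B3 (evK j) mI nm (evK i)); apply/negP=> /eqP /enum_val_inj ij; by move: ji; rewrite ij eqxx.
case: a => [[i|i]|]; case: b => [[j|j]|] //=.
- by rewrite esym km.
- by rewrite esym; apply/negbTE/yK'.
- by have [mI _] := mmP (evK i); have [mJ _] := mmP (evK j); apply/negbTE/HI.
- by have [mI _] := mmP (evK i); apply: Iy.
- by apply/negbTE/yK'.
- by have [mI _] := mmP (evK j); rewrite esym; apply: Iy.
Qed.

Lemma hinj : injective hh.
Proof.
move=> a b hab.
have H : forall c, G1_rel a c = G1_rel b c by move=> c; rewrite -!hrel hab.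
case: a b hab H => [[i|i]|] [[j|j]|] //= hab H.
all: first [ by move: (H None) | by move: (H (Some (inr i))) => /=; rewrite eqxx
  | by move: (H (Some (inr j))) => /=; rewrite eqxx
  | by move: (H (Some (inl i))) => /=; rewrite eqxx; case: (eqVneq j i) => // -> ].
Qed.

Lemma hsurj x : exists a, hh a = x.
Proof.
have := Hpart x; case/orP=> [/eqP ->|]; first by exists None.
case/orP=> [xK|xI]; first by exists (Some (inl (enum_rank_in xK x))); rewrite /= enum_rankK_in.
have [k [kK nk _]] := B2 xI.
exists (Some (inr (enum_rank_in kK k))); rewrite /= enum_rankK_in //.
by have [mI nm] := mmP kK; apply: (B4 kK mI xI nm nk).
Qed.

Lemma caseB_G1 : in_G1 e #|K|.
Proof.
pose f x := odflt None [pick a | hh a == x].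
have fK : cancel f hh.
  move=> x; rewrite /f; case: pickP => [a /eqP //|none].
  by have [a ha] := hsurj x; move: (none a); rewrite ha eqxx.
have hK : cancel hh f by move=> a; apply: hinj; rewrite fK.
exists f; split; first by exists hh.
by move=> x z; rewrite -hrel !fK.
Qed.

End CaseB.
Hypothesis EC : forall p q, p != q -> ~~ e p q ->
  (exists r, ((r == q) || (e p r && ~~ e q r)) /\ forall w, w != q -> dom p r w) \/
  (exists r, ((r == p) || (e q r && ~~ e p r)) /\ forall w, w != p -> dom q r w).

Section CaseA.
Variables (I K : {set T}) (x y1 y2 : T).
Hypotheses (HI : indep I) (HK : cliq K) (xI : x \in I) (xK : x \in K)
  (IK : forall w, w \in I -> w \in K -> w = x)
  (Hpart : forall w, [|| w == y1, w == y2, w \in K | w \in I])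
  (y1I : y1 \notin I) (y1K : y1 \notin K) (y2I : y2 \notin I) (y2K : y2 \notin K)
  (y12 : y1 != y2) (exy1 : e x y1) (nxy2 : ~~ e x y2)
  (F2 : forall k, k \in K -> k != x -> ~~ e k y1)
  (F3 : forall w, w \in I -> w != x -> e w y2).

Lemma notin_neq (A : {set T}) a b : a \in A -> b \notin A -> a != b.
Proof. by move=> aA bA; apply/negP=> /eqP ab; move: bA; rewrite -ab aA. Qed.

Lemma caseA_split : (forall k, k \in K -> k != x -> e k y2) \/ (forall u, u \in I -> u != x -> ~~ e u y1).
Proof.
case: (boolP [forall k in K, (k != x) ==> e k y2]) => [/forallP H1|].
  by left=> k kK kx; move: (H1 k); rewrite kK kx.
move/forallPn => [v]; rewrite negb_imply => /andP [vK]; rewrite negb_imply => /andP [vx nvy2].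
case: (boolP [forall u in I, (u != x) ==> ~~ e u y1]) => [/forallP H2|].
  by right=> u uI ux; move: (H2 u); rewrite uI ux.
move/forallPn => [u]; rewrite negb_imply => /andP [uI]; rewrite negb_imply negbK => /andP [ux euy1].
exfalso.
have kill : forall k, k \in K -> (forall w, w \in I -> w != x -> e w k) -> False.
  move=> k kK Hk; have euk := Hk u uI ux.
  have [w nw] : exists w, ~~ dom k u w by apply: nodom; rewrite esym.
  move: nw; rewrite /dom; case: (eqVneq w k) => [->|wk] //=.
  have := Hpart w; case/or4P => [/eqP->|/eqP->|wK|wI].
  - by rewrite [e y1 u]esym euy1 !orbT.
  - by rewrite [e y2 u]esym F3 // !orbT.
  - by rewrite (HK wK kK wk) orbT.
  - case: (eqVneq w x) => [wx|wx]; last by rewrite (Hk w wI wx) orbT.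
    have wK : w \in K by rewrite wx.
    by rewrite (HK wK kK wk) orbT.

have y1v : (y1 == v) = false by apply/negbTE; rewrite eq_sym; apply: notin_neq vK y1K.
have ny1v : e y1 v = false by rewrite esym; apply/negbTE/F2.
have ey12 : e y1 y2.
  have vy2 : v != y2 := notin_neq vK y2K.
  have [[r [Hr Hd]]|[r [Hr Hd]]] := EC vy2 nvy2.
  - move: (Hd y1 y12); rewrite /dom y1v ny1v /=.
    case/orP: Hr => [/eqP -> | /andP [evr nqr]]; first by rewrite (negbTE y12).
    case/orP => [/eqP y1r | ey1r]; first by move: evr; rewrite -y1r esym ny1v.
    case: (eqVneq r x) => [rx|rx].
      exfalso; apply: (kill v vK) => w wI wx.
      have wv : (w == v) = false.
        by apply/negP=> /eqP wv; move: vx; rewrite -wv (IK wI) ?eqxx // wv.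
      by move: (Hd w (notin_neq wI y2I)); rewrite /dom rx wv (negbTE wx) (negbTE (HI wI xI)) orbF.
    have := Hpart r; case/or4P => [/eqP rE|/eqP rE|rK|rI].
    + by move: ey1r; rewrite rE eirr.
    + by move: evr; rewrite rE (negbTE nvy2).
    + by move: (F2 rK rx); rewrite esym ey1r.
    + by move: nqr; rewrite esym F3.
  - case/orP: Hr => [/eqP rv | /andP [ey2r nvr]].
      by move: (Hd y1 (negbT y1v)); rewrite /dom rv (negbTE y12) y1v ny1v /= orbF.
    have xv : x != v by rewrite eq_sym.
    move: (Hd x xv); rewrite /dom (negbTE (notin_neq xK y2K)) (negbTE nxy2) /=.
    case/orP => [/eqP xr|exr]; first by move: ey2r; rewrite -xr esym (negbTE nxy2).
    have := Hpart r; case/or4P => [/eqP rE|/eqP rE|rK|rI].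
    + by rewrite esym -rE.
    + by move: ey2r; rewrite rE eirr.
    + case: (eqVneq r v) => [rv|rv]; first by move: ey2r; rewrite rv esym (negbTE nvy2).
      by move: nvr; rewrite HK // eq_sym.
    + by move: (HI xI rI); rewrite exr.
have [a [b [eab [ny2a ny2b ay2 bY2 Hd]]]] := Dv y2.
have key : forall a' b', e a' b' -> ~~ e y2 a' -> ~~ e y2 b' -> a' != y2 -> b' != y2 ->
    (forall w, w != y2 -> dom a' b' w) -> e y1 a' -> False.
  move=> a' b' eab' na nb ay bY Hd' ey1a.
  have ax : a' = x.
    have := Hpart a'; case/or4P => [/eqP aE|/eqP aE|aK|aI].
    - by move: ey1a; rewrite aE eirr.
    - by move: ay; rewrite aE eqxx.
    - by case: (eqVneq a' x) => // ax; move: (F2 aK ax); rewrite esym ey1a.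
    - by case: (eqVneq a' x) => // ax; move: (F3 aI ax); rewrite esym (negbTE na).
  subst a'.
  have := Hpart b'; case/or4P => [/eqP bE|/eqP bE|bK|bI].
  - by move: nb; rewrite bE esym ey12.
  - by move: bY; rewrite bE eqxx.
  - apply: (kill b' bK) => w wI wx.
    move: (Hd' w (notin_neq wI y2I)); rewrite /dom (negbTE wx) (negbTE (HI wI xI)) /=.
    case/orP => [/eqP wb|//]; have wK : w \in K by rewrite wb.
    by move: wx; rewrite (IK wI wK) eqxx.
  - by move: (HI xI bI); rewrite eab'.
move: (Hd y1 y12); rewrite /dom.
case/or4P => [/eqP y1a|/eqP y1b|ey1a|ey1b].
- by move: ny2a; rewrite -y1a esym ey12.
- by move: ny2b; rewrite -y1b esym ey12.
- exact: (key a b).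
- apply: (key b a) => //; first by rewrite esym.
  by move=> w /Hd; rewrite domC.
Qed.
End CaseA.

Lemma main_comb (I K : {set T}) : indep I -> cliq K -> 2 <= #|K| ->
  #|I| + #|K| <= #|T| - 1 /\
  (#|I| + #|K| = #|T| - 1 -> exists l, 2 <= l /\ in_G1 e l).
Proof.
move=> HI HK K2.
have IKu : forall w w', w \in I -> w \in K -> w' \in I -> w' \in K -> w = w'.
  move=> w w' wI wK w'I w'K; case: (eqVneq w w') => // ww.
  by move: (HI _ _ wI w'I); rewrite (HK _ _ wK w'K ww).
pose O := ~: (I :|: K).
have inO : forall w, (w \in O) = (w \notin I) && (w \notin K).
  by move=> w; rewrite !inE negb_or.
have cnt : #|I| + #|K| + #|O| = #|T| + #|I :&: K|.
  by have := cardsUI I K; have := cardsC (I :|: K); rewrite -/O; lia.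
case: (set_0Vmem (I :&: K)) => [IK0 | [x]].
- have IKn : forall w, w \in I -> w \notin K.
    move=> w wI; apply/negP=> wK; have : w \in I :&: K by rewrite inE wI wK.
    by rewrite IK0 inE.
  rewrite IK0 cards0 in cnt.
  have [v vK] : exists v, v \in K by apply/card_gt0P; exact: (leq_trans (isT : 0 < 2) K2).
  have O1 : 0 < #|O|.
    have [a [b [eab [nva nvb anv bnv Hd]]]] := Dv v.
    have aK := outK HK vK nva anv; have bK := outK HK vK nvb bnv.
    apply/card_gt0P; case: (boolP (a \in I)) => aI; last by exists a; rewrite inO aI aK.
    case: (boolP (b \in I)) => bI; last by exists b; rewrite inO bI bK.
    by move: (HI _ _ aI bI); rewrite eab.
  split; first exact: (arith1 cnt O1).
  move=> Heq; have O1' : #|O| == 1 by apply/eqP; exact: (arith2 cnt Heq O1).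
  have [y Oy] := cards1P O1'.
  have yO : y \in O by rewrite Oy set11.
  move: (yO); rewrite inO => /andP [yI yK].
  exists #|K|; split => //.
  apply: (caseB_G1 HI HK _ yI yK IKn); last by exists v.
  move=> w; case: (boolP (w \in O)) => [|]; first by rewrite Oy inE => ->.
  by rewrite inO negb_and !negbK; case/orP => ->; rewrite ?orbT.
- move=> xIK; have [xI xK] : x \in I /\ x \in K by move: xIK; rewrite inE => /andP.
  have IKx : I :&: K = [set x].
    apply/setP=> w; rewrite !inE; apply/andP/eqP => [[wI wK]|->]; [exact: IKu | by split].
  rewrite IKx cards1 in cnt.
  have IKw : forall w, w \in I -> w \in K -> w = x by move=> w wI wK; apply: IKu.
  have [y2 [z [y2O eyz nxy2 nxz Hdx]]] : exists y2 z, [/\ y2 \in O, e y2 z, ~~ e x y2, ~~ e x z &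
      forall w, w != x -> dom y2 z w].
    have [a [b [eab [nxa nxb axx bxx Hd]]]] := Dv x.
    have aK := outK HK xK nxa axx; have bK := outK HK xK nxb bxx.
    case: (boolP (a \in I)) => aI.
      case: (boolP (b \in I)) => bI; first by move: (HI _ _ aI bI); rewrite eab.
      exists b, a; split => //; [by rewrite inO bI bK | by rewrite esym | by move=> w /Hd; rewrite domC].
    by exists a, b; split => //; rewrite inO aI aK.
  have getY1 : forall v, v \in K -> v != x -> exists t, [/\ t \in O, e x t & ~~ e v t].
    move=> v vK vx; have [a [b [eab [nva nvb anv bnv Hd]]]] := Dv v.
    have xv : x != v by rewrite eq_sym.
    have evx : e v x by apply: HK.
    have := Hd x xv; rewrite /dom.
    case/or4P => [/eqP xa|/eqP xb|exa|exb].
    - by move: nva; rewrite -xa evx.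
    - by move: nvb; rewrite -xb evx.
    - exists a; split => //; rewrite inO (outK HK vK nva anv) andbT; apply/negP=> aI.
      by move: (HI _ _ xI aI); rewrite exa.
    - exists b; split => //; rewrite inO (outK HK vK nvb bnv) andbT; apply/negP=> bI.
      by move: (HI _ _ xI bI); rewrite exb.
  have [v vK vx] : exists2 v, v \in K & v != x.
    have : 0 < #|K :\ x| by move: (cardsD1 x K); rewrite xK; apply: arith3.
    by case/card_gt0P => v; rewrite !inE => /andP [vx vK]; exists v.
  have [y1 [y1O exy1 nvy1]] := getY1 v vK vx.
  have y12 : y1 != y2 by apply/negP=> /eqP y12; move: nxy2; rewrite -y12 exy1.
  have O2 : 2 <= #|O|.
    have : [set y1; y2] \subset O.
      by apply/subsetP=> w; rewrite in_set2 => /orP [] /eqP ->.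
    by move/subset_leq_card; rewrite cards2 y12.
  split; first exact: (arith1 cnt O2).
  move=> Heq; have O2' : #|O| = 2 by exact: (arith2 cnt Heq O2).
  have Opart : forall w, w \in O -> (w == y1) || (w == y2).
    move=> w wO; apply/negPn/negP; rewrite negb_or => /andP [w1 w2].
    have c0 : #|(O :\ y1) :\ y2| = 0.
      have h1 := cardsD1 y1 O; have h2 := cardsD1 y2 (O :\ y1).
      rewrite y1O in h1; rewrite in_setD1 y2O [y2 == y1]eq_sym y12 in h2.
      exact: arith4 O2' h1 h2.
    have : w \in (O :\ y1) :\ y2 by rewrite !in_setD1 w1 w2 wO.
    by rewrite (cards0_eq c0) inE.
  have Hpart : forall w, [|| w == y1, w == y2, w \in K | w \in I].
    move=> w; case: (boolP (w \in O)) => wO; first by case/orP: (Opart w wO) => ->; rewrite ?orbT.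
    by move: wO; rewrite inO negb_and !negbK; case/orP => ->; rewrite ?orbT.
  move: (y1O) (y2O); rewrite !inO => /andP [y1I y1K] /andP [y2I y2K].
  have F2 : forall k, k \in K -> k != x -> ~~ e k y1.
    move=> k kK kx; have [t [tO ext nkt]] := getY1 k kK kx.
    case/orP: (Opart t tO) => /eqP tE; first by rewrite -tE.
    by move: nxy2; rewrite -tE ext.
  have zI : z \in I.
    have := Hpart z; case/or4P => [/eqP zE|/eqP zE|zK|//].
    - by move: nxz; rewrite zE exy1.
    - by move: eyz; rewrite zE eirr.
    - case: (eqVneq x z) => [xz|xz]; first by move: nxy2; rewrite xz esym eyz.
      by move: nxz; rewrite (HK _ _ xK zK xz).
  have F3 : forall w, w \in I -> w != x -> e w y2.
    move=> w wI wx; move: (Hdx w wx); rewrite /dom (negbTE (HI _ _ wI zI)) orbF.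
    case/or3P => [/eqP wy|/eqP wz|//]; first by move: y2I; rewrite -wy wI.
    by rewrite wz esym.
  case: (caseA_split HI HK xI xK IKw Hpart y1K y2I y2K y12 nxy2 F2 F3) => [H1|H2].
  + have cK2 : #|y2 |: (K :\ x)| = #|K|.
      by rewrite cardsU1 in_setD1 (negbTE y2K) andbF [RHS](cardsD1 x K) xK.
    exists #|y2 |: (K :\ x)|; split; first by rewrite cK2.
    apply: (caseB_G1 (I:=I) (K:=y2 |: (K :\ x)) (y:=y1) HI).
    * move=> a b; rewrite !in_setU1 !in_setD1.
      case/orP=> [/eqP-> | /andP [ax aK]]; case/orP=> [/eqP-> | /andP [bx bK]].
      - by rewrite eqxx.
      - by move=> _; rewrite esym; apply: H1.
      - by move=> _; apply: H1.
      - exact: HK.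
    * move=> w; rewrite in_setU1 in_setD1; have := Hpart w; case/or4P => [->|->|wK|->]; rewrite ?orbT //.
      by case: (eqVneq w x) => [->|_]; rewrite ?xI ?wK ?orbT.
    * by [].
    * by rewrite in_setU1 in_setD1 (negbTE y12) (negbTE y1K) andbF.
    * move=> w wI; rewrite in_setU1 in_setD1 negb_or; apply/andP; split.
        by apply/negP=> /eqP wy; move: y2I; rewrite -wy wI.
      by apply/negP=> /andP [wx wK]; move: wx; rewrite (IKw _ wI wK) eqxx.
    * by exists y2; rewrite setU11.
  + exists #|K|; split => //.
    apply: (caseB_G1 (I:=y1 |: (I :\ x)) (K:=K) (y:=y2)) => //.
    * move=> a b; rewrite !in_setU1 !in_setD1.
      case/orP=> [/eqP-> | /andP [ax aI]]; case/orP=> [/eqP-> | /andP [bx bI]].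
      - by rewrite eirr.
      - by rewrite esym; apply: H2.
      - by apply: H2.
      - exact: HI.
    * move=> w; rewrite in_setU1 in_setD1; have := Hpart w; case/or4P => [->|->|->|wI]; rewrite ?orbT //.
      by case: (eqVneq w x) => [->|_]; rewrite ?xK ?wI ?orbT.
    * by rewrite in_setU1 in_setD1 eq_sym (negbTE y12) (negbTE y2I) andbF.
    * move=> w; rewrite in_setU1 in_setD1; case/orP => [/eqP->//|/andP [wx wI]].
      by apply/negP=> wK; move: wx; rewrite (IKw _ wI wK) eqxx.
    * by exists x.
Qed.

End Comb.

Lemma bigmin_le (I : eqType) (r : seq I) (P : pred I) (F : I -> nat) x j :
  j \in r -> P j -> \big[minn/x]_(i <- r | P i) F i <= F j.
Proof.
elim: r => // a r IH; rewrite inE big_cons => /orP [/eqP <-|jr] Pj.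
  by rewrite Pj geq_minl.
by case: ifP => _; [rewrite geq_min IH ?orbT | exact: IH].
Qed.
Section Glue.
Variable T : finType.
Implicit Types (e : rel T) (S D : {set T}).

Lemma gamma_le e S D : is_cds_on e S D -> gamma_c_on e S <= #|D|.
Proof. by move=> HD; apply: bigmin_le => //; rewrite mem_index_enum. Qed.

Lemma gamma_ge3 e S : (forall D, is_cds_on e S D -> 3 <= #|D|) -> 3 <= #|S| -> 3 <= gamma_c_on e S.
Proof.
move=> H HS; rewrite /gamma_c_on; apply: (big_ind (fun m => 3 <= m)) => //.
by move=> m1 m2 h1 h2; rewrite leq_min h1 h2.
Qed.

Lemma gamma_small e S : gamma_c_on e S < 3 -> 3 <= #|S| -> exists D, is_cds_on e S D /\ #|D| <= 2.
Proof.
move=> Hg HS; case: (boolP [exists D, is_cds_on e S D && (#|D| <= 2)]) => [/existsP [D /andP [h1 h2]]|].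
  by exists D.
move/existsPn=> H; have : 3 <= gamma_c_on e S.
  apply: gamma_ge3 => // D HD; by move: (H D); rewrite HD /= -ltnNge.
by rewrite leqNgt Hg.
Qed.

Lemma conn_nb (r : rel T) x y : connect r x y -> x != y -> exists z, r x z.
Proof.
case/connectP=> [[|z p]] /= => [_ -> | /andP [rxz _] _]; first by rewrite eqxx.
by exists z.
Qed.


Lemma cds_pair e S a b : symmetric e -> (a == b) || e a b -> a \in S -> b \in S ->
  (forall w, w \in S -> dom e a b w) -> is_cds_on e S [set a; b].
Proof.
move=> esym hab aS bS Hd; apply/and3P; split.
- by apply/subsetP => w; rewrite !inE => /orP [] /eqP ->.
- apply/forallP=> w; apply/implyP=> wS; move: (Hd w wS); rewrite /dom !inE.
  case/or4P => [->|->|ewa|ewb]; rewrite ?orbT //.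
    by apply/orP; right; apply/existsP; exists a; rewrite !inE eqxx ewa.
  by apply/orP; right; apply/existsP; exists b; rewrite !inE eqxx ewb orbT.
- apply/forallP=> x; apply/implyP=> xD; apply/forallP=> y; apply/implyP=> yD.
  case: (eqVneq a b) => [ab|ab].
    by move: xD yD; rewrite !inE -ab !orbb => /eqP -> /eqP ->; apply: connect0.
  have eab : e a b by move: hab; rewrite (negbTE ab).
  move: xD yD; rewrite !inE => /orP [] /eqP -> /orP [] /eqP ->; try exact: connect0.
  all: by apply: connect1; rewrite /restr /= !inE !eqxx ?orbT /= ?eab // esym eab.
Qed.

Lemma dom_of e a b w : (w \in [set a; b]) || [exists y in [set a; b], e w y] -> dom e a b w.
Proof.
rewrite /dom !inE; case/orP => [/orP [] -> //| /existsP [y]]; rewrite ?orbT //.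
by rewrite !inE => /andP [/orP [] /eqP -> ewy]; rewrite ewy !orbT.
Qed.

Lemma arith5 n : 0 < n -> n != 1 -> n <= 2 -> n == 2.
Proof. by case: n => [|[|[|]]]. Qed.

Lemma cds_extract e S D : irreflexive e -> is_cds_on e S D -> #|D| <= 2 -> (exists s, s \in S) ->
  exists a b, [/\ a \in S, b \in S, (a == b) || e a b & forall w, w \in S -> dom e a b w].
Proof.
move=> eirr /and3P [DS /forallP Hdom /forallP Hcon] D2 [s sS].
have domD : forall w, w \in S -> (w \in D) || [exists y in D, e w y].
  by move=> w wS; move: (Hdom w); rewrite wS.
case: (set_0Vmem D) => [D0|[a aD]].
  by move: (domD s sS); rewrite D0 inE /=; case/existsP => y; rewrite inE.
case: (boolP (#|D| == 1)) => [/cards1P [a' Da]|D1].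
  have a'S : a' \in S by apply: (subsetP DS); rewrite Da set11.
  exists a', a'; split => //; first by rewrite eqxx.
  move=> w /domD; rewrite Da => h; apply: dom_of; by rewrite setUid.
have : 0 < #|D| by apply/card_gt0P; exists a.
move/arith5 => /(_ D1 D2) /cards2P [a' [b' [ab DE]]].
have a'S : a' \in S by apply: (subsetP DS); rewrite DE !inE eqxx.
have b'S : b' \in S by apply: (subsetP DS); rewrite DE !inE eqxx orbT.
have eab : e a' b'.
  have a'D : a' \in D by rewrite DE !inE eqxx.
  have b'D : b' \in D by rewrite DE !inE eqxx orbT.
  move: (Hcon a'); rewrite a'D => /forallP /(_ b'); rewrite b'D /= => /conn_nb /(_ ab) [z].
  rewrite /restr /= DE !inE => /and3P [ez _ /orP [] /eqP zE]; last by rewrite -zE.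
  by move: ez; rewrite zE eirr.
exists a', b'; split => //; first by rewrite eab orbT.
by move=> w /domD; rewrite DE => h; apply: dom_of.
Qed.

End Glue.

Section Final.
Variable T : finType.
Variable e : rel T.
Hypothesis esym : symmetric e.
Hypothesis eirr : irreflexive e.
Hypothesis Hconn : connected_on e [set: T].
Hypothesis gc3 : gamma_c e = 3.
Hypothesis Hedge : forall u v : T, u != v -> ~~ e u v -> gamma_c (add_edge e u v) < 3.
Hypothesis n3 : 3 <= #|T|.
Hypothesis Hvc : forall v : T, connected_on e (setT :\ v).
Hypothesis Hvtx : forall v : T, gamma_c_on e (setT :\ v) < 3.

Lemma other (w : T) : exists x, x != w.
Proof.
have : 0 < #|[set: T] :\ w| by move: (cardsD1 w [set: T]); rewrite cardsT inE; lia.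
by case/card_gt0P => x; rewrite !inE => /andP [xw _]; exists x.
Qed.

Lemma nbr (w : T) : exists z, e w z.
Proof.
have [x xw] := other w.
have HC := Hconn; rewrite /connected_on in HC; have := HC w x; rewrite !inE => /(_ isT isT) /conn_nb.
by rewrite eq_sym => /(_ xw) [z]; rewrite /restr /= => /andP [ewz _]; exists z.
Qed.

Lemma nT4 : 4 <= #|T|.
Proof.
have : 0 < #|T| by lia.
case/card_gt0P => v _.
pose D := [set: T] :\ v.
have HD : is_cds_on e [set: T] D.
  apply/and3P; split; first exact: subsetT.
    apply/forallP=> x; apply/implyP=> _; case: (eqVneq x v) => [->|xv].
      have [z evz] := nbr v.
      apply/orP; right; apply/existsP; exists z; rewrite evz andbT !inE andbT.
      by apply/negP => /eqP zv; move: evz; rewrite zv eirr.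
    by rewrite !inE xv.
  apply/forallP=> x; apply/implyP=> xD; apply/forallP=> y; apply/implyP=> yD; exact: Hvc.
have := gamma_le HD; rewrite -/(gamma_c e) gc3.
have := cardsD1 v [set: T]; rewrite cardsT inE -/D.
lia.
Qed.

Lemma noD a b : e a b -> exists w, ~~ dom e a b w.
Proof.
move=> eab; case: (boolP [forall w, dom e a b w]) => [/forallP H|/forallPn //].
have HD : is_cds_on e [set: T] [set a; b].
  apply: cds_pair => //.
  all: try by rewrite ?inE ?eab ?orbT.
have := gamma_le HD; rewrite -/(gamma_c e) gc3 cards2.
by case: (a != b).
Qed.

Lemma noD1 w : (forall x, (x == w) || e x w) -> False.
Proof.
move=> H; have [z ewz] := nbr w; have [w0] := noD ewz.
by rewrite /dom; case/orP: (H w0) => ->; rewrite ?orbT.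
Qed.

Lemma Dv_glue v : exists a b, e a b /\ [/\ ~~ e v a, ~~ e v b, a != v, b != v &
   forall w, w != v -> dom e a b w].
Proof.
have S3 : 3 <= #|[set: T] :\ v|.
  by have := cardsD1 v [set: T]; rewrite cardsT inE; have := nT4; lia.
have [D [HD D2]] := gamma_small (Hvtx v) S3.
have [s sS] : exists s, s \in [set: T] :\ v by apply/card_gt0P; lia.
have [a [b [aS bS hab Hd]]] := cds_extract eirr HD D2 (ex_intro _ s sS).
have av : a != v by move: aS; rewrite !inE => /andP [].
have bv : b != v by move: bS; rewrite !inE => /andP [].
have Hd' : forall w, w != v -> dom e a b w by move=> w wv; apply: Hd; rewrite !inE wv.
have [z evz] := nbr v.
have zv : z != v by apply/negP=> /eqP zv; move: evz; rewrite zv eirr.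
case: (eqVneq a b) => [ab|ab].
  exfalso; subst b; case: (boolP (e v a)) => eva.
    apply: (noD1 (w:=a)) => x; case: (eqVneq x v) => [->|xv]; first by rewrite eva orbT.
    by move: (Hd' x xv); rewrite /dom; case/or4P => ->; rewrite ?orbT.
  have eza : e z a.
    move: (Hd' z zv); rewrite /dom; case/or4P => [/eqP za|/eqP za|//|//];
      by move: eva; rewrite -za evz.
  have [w0 nw0] : exists w0, ~~ dom e a z w0 by apply: noD; rewrite esym.
  move: nw0; case: (eqVneq w0 v) => [->|w0v]; first by rewrite /dom evz !orbT.
  by move: (Hd' w0 w0v); rewrite /dom; case/or4P => ->; rewrite ?orbT.
have eab : e a b by move: hab; rewrite (negbTE ab).
exists a, b; split => //; split => //.
- apply/negP => eva; have [w0] := noD eab.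
  case: (eqVneq w0 v) => [->|w0v]; first by rewrite /dom [e v a]eva !orbT.
  by rewrite Hd'.
- apply/negP => evb; have [w0] := noD eab.
  case: (eqVneq w0 v) => [->|w0v]; first by rewrite /dom [e v b]evb !orbT.
  by rewrite Hd'.
Qed.

Lemma EC_key (e' : rel T) p q b :
  (forall x y, e' x y = [|| e x y, (x == p) && (y == q) | (x == q) && (y == p)]) ->
  p != q -> ~~ e p q -> (p == b) || e' p b -> (forall w, dom e' p b w) ->
  exists r, ((r == q) || (e p r && ~~ e q r)) /\ forall w, w != q -> dom e p r w.
Proof.
move=> He' pq npq hb Hd.
have conv : forall w r, w != q -> r != q -> r != p -> dom e' p r w -> dom e p r w.
  move=> w r wq rq rp; rewrite /dom !He' (negbTE wq) (negbTE rq) (negbTE rp) (negbTE pq).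
  by rewrite !(andbF, andFb, orbF).
case: (eqVneq b q) => [bq|bq].
  exists q; split; first by rewrite eqxx.
  move=> w wq; move: (Hd w); rewrite bq /dom !He' (negbTE wq) (negbTE pq) !eqxx.
  rewrite !(andbF, andFb, andbT, orbF).
  by case/orP => [->//|/orP [//|/orP [->|/orP [->|->]]]]; rewrite ?orbT.
case: (eqVneq b p) => [bp|bp].
  exfalso; subst b.
  have [s eqs] := nbr q.
  have sp : s != p by apply/negP=> /eqP sp; move: npq; rewrite esym -sp eqs.
  have sq : s != q by apply/negP=> /eqP sq; move: eqs; rewrite sq eirr.
  have esp : e s p.
    move: (Hd s); rewrite /dom !He' (negbTE sp) (negbTE sq) (negbTE pq).
    by rewrite !(andbF, andFb, orbF) /= orbb.
  have [w0] : exists w0, ~~ dom e p s w0 by apply: noD; rewrite esym.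
  case: (eqVneq w0 q) => [->|w0q]; first by rewrite /dom [e q s]eqs !orbT.
  move: (Hd w0); rewrite /dom !He' (negbTE w0q) (negbTE pq).
  rewrite !(andbF, andFb, orbF).
  by case/or4P => [->|->|->|->]; rewrite ?orbT.
have epb : e p b.
  move: hb; rewrite He' eq_sym (negbTE bp) (negbTE bq) (negbTE pq).
  by rewrite !(andbF, andFb, orbF).
case: (boolP (e q b)) => eqb.
  exfalso; have [w0] := noD epb.
  case: (eqVneq w0 q) => [->|w0q]; first by rewrite /dom eqb !orbT.
  by rewrite conv.
exists b; split; first by rewrite epb eqb orbT.
by move=> w wq; apply: conv.
Qed.

Lemma EC_glue p q : p != q -> ~~ e p q ->
  (exists r, ((r == q) || (e p r && ~~ e q r)) /\ forall w, w != q -> dom e p r w) \/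
  (exists r, ((r == p) || (e q r && ~~ e p r)) /\ forall w, w != p -> dom e q r w).
Proof.
move=> pq npq.
pose e' := add_edge e p q.
have He' : forall x y, e' x y = [|| e x y, (x == p) && (y == q) | (x == q) && (y == p)] by [].
have He'2 : forall x y, e' x y = [|| e x y, (x == q) && (y == p) | (x == p) && (y == q)].
  by move=> x y; rewrite He'; case: (e x y); case: (x == p); case: (y == q); case: (x == q); case: (y == p).
have e'sym : forall x y, e' x y = e' y x.
  move=> x y; rewrite !He' esym; case: (e y x); case: (x == p); case: (y == q); case: (x == q); case: (y == p) => //.
have e'irr : irreflexive e'.
  move=> x; rewrite He' eirr /=; case: (eqVneq x p) => [->|xp]; first by rewrite (negbTE pq).
  by rewrite andbF.
have S3 : 3 <= #|[set: T]| by rewrite cardsT; have := nT4; lia.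
have Hg : gamma_c_on e' [set: T] < 3 by exact: (Hedge pq npq).
have [D [HD D2]] := gamma_small Hg S3.
have [a [b [_ _ hab Hd]]] := cds_extract e'irr HD D2 (ex_intro _ p (in_setT p)).
have Hd' : forall w, dom e' a b w by move=> w; apply: Hd; rewrite inE.
move=> {Hd HD D2 Hg}.
wlog : a b hab Hd' / [|| a == p, a == q | [&& a != p, a != q, b != p & b != q]].
  move=> W; case: (boolP ((a == p) || (a == q))) => ha; first by apply: (W a b) => //; rewrite orbA ha.
  case: (boolP ((b == p) || (b == q))) => hb.
    apply: (W b a); first by rewrite eq_sym e'sym.
      by move=> w; rewrite domC.
    by rewrite orbA hb.
  apply: (W a b) => //; move: ha hb; rewrite !negb_or => /andP [-> ->] /andP [-> ->].
  by rewrite !orbT.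
case/or3P => [/eqP ap|/eqP aq|/and4P [ap aq bp bq]].
- by left; subst a; exact: (EC_key He' pq npq hab Hd').
- right; subst a; apply: (EC_key He'2 _ _ hab Hd'); first by rewrite eq_sym.
  by rewrite esym.
- exfalso.
  have conv : forall x r, r != p -> r != q -> e' x r = e x r.
    by move=> x r rp rq; rewrite He' (negbTE rp) (negbTE rq) !andbF !orbF.
  case: (eqVneq a b) => [ab|ab].
    subst b; apply: (noD1 (w:=a)) => x.
    by move: (Hd' x); rewrite /dom conv //; case/or4P => ->; rewrite ?orbT.
  have eab : e a b by move: hab; rewrite (negbTE ab) conv.
  have [w0] := noD eab.
  by move: (Hd' w0); rewrite /dom !conv // => ->.
Qed.

End Final.

Lemma arith6 a b n l : a + b <= n - 1 -> l <= a -> l <= b -> n = (l + l).+1 -> a + b = n - 1.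
Proof. lia. Qed.

Theorem theorem3p6 (T : finType) (e : rel T) :
  simple_graph e ->
  connected_on e [set: T] ->
  maximal_vertex_critical e 3 ->
  independence_number e + clique_number e <= #|T| - 1 /\
  (independence_number e + clique_number e = #|T| - 1 <->
   exists l : nat, 2 <= l /\ in_G1 e l).
Proof.
move=> [esym eirr] Hconn [[gc3 Hedge] [[n3 [_ Hvc]] [_ Hvtx]]].
have nodom := noD esym gc3.
have Dv := Dv_glue esym eirr Hconn gc3 n3 Hvc Hvtx.
have EC := EC_glue esym eirr Hconn gc3 Hedge n3 Hvc.
have Hpos1 : 0 < #|[pred S : {set T} | independent e S]|.
  apply/card_gt0P; exists set0; rewrite inE /independent; apply/forallP => x; by rewrite inE.
have Hpos2 : 0 < #|[pred S : {set T} | clique e S]|.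
  apply/card_gt0P; exists set0; rewrite inE /clique; apply/forallP => x; by rewrite inE.
have [I II HeqI] := @eq_bigmax_cond _ [pred S : {set T} | independent e S] (fun S => #|S|) Hpos1.
have [K KK HeqK] := @eq_bigmax_cond _ [pred S : {set T} | clique e S] (fun S => #|S|) Hpos2.
have alphaE : independence_number e = #|I| by exact: HeqI.
have omegaE : clique_number e = #|K| by exact: HeqK.
have HI : indep e I.
  move=> a b aI bI; move: II; rewrite inE => /forallP /(_ a); rewrite aI => /forallP /(_ b).
  by rewrite bI.
have HK : cliq e K.
  move=> a b aK bK ab; move: KK; rewrite inE => /forallP /(_ a); rewrite aK => /forallP /(_ b).
  by rewrite bK ab.
have K2 : 2 <= #|K|.
  have : 0 < #|T| by apply: leq_trans n3.
  case/card_gt0P => v _; have [a [b [eab _]]] := Dv v.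
  have ab : a != b by apply/negP=> /eqP ab; move: eab; rewrite ab eirr.
  have Hc : clique e [set a; b].
    apply/forallP=> x; apply/implyP; rewrite !inE => /orP [] /eqP ->;
    apply/forallP=> y; apply/implyP; rewrite !inE => /orP [] /eqP ->;
    by rewrite ?eqxx ?eab ?implybT // esym eab implybT.
  rewrite -omegaE; have := @leq_bigmax_cond _ (fun S : {set T} => clique e S) (fun S => #|S|) _ Hc.
  by rewrite cards2 ab.
have [Hle Heq] := main_comb esym eirr nodom Dv EC HI HK K2.
rewrite alphaE omegaE; split => //; split => // [[l [l2 [f [fbij frel]]]]].
have [g fg gf] := fbij.
have nT : #|T| = (l + l).+1 by rewrite (bij_eq_card fbij) card_option card_sum card_ord.
pose Z := [set g (Some (inr i)) | i : 'I_l].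
pose Q := [set g (Some (inl i)) | i : 'I_l].
have ginj : injective g := can_inj gf.
have cZ : #|Z| = l.
  rewrite card_imset ?card_ord // => i j /ginj [].  done.
have cQ : #|Q| = l.
  rewrite card_imset ?card_ord // => i j /ginj [].  done.
have iZ : independent e Z.
  apply/forallP => x; apply/implyP => /imsetP [i _ ->]; apply/forallP => y; apply/implyP => /imsetP [j _ ->].
  by rewrite frel !gf.
have cQQ : clique e Q.
  apply/forallP => x; apply/implyP => /imsetP [i _ ->]; apply/forallP => y; apply/implyP => /imsetP [j _ ->].
  rewrite frel !gf /=; apply/implyP => ne; apply/negP => /eqP ij; by move: ne; rewrite ij eqxx.
have la : l <= #|I|.
  rewrite -cZ -alphaE; exact: (@leq_bigmax_cond _ (fun S : {set T} => independent e S) (fun S => #|S|) _ iZ).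
have lw : l <= #|K|.
  rewrite -cQ -omegaE; exact: (@leq_bigmax_cond _ (fun S : {set T} => clique e S) (fun S => #|S|) _ cQQ).
exact: (arith6 Hle la lw nT).
Qed.
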